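(* Let $\mathcal C$ be an open (i.e. non-closed) convex curve whose radius of curvature satisfies $\rho\ge R_1$ at every point, for some constant $R_1>0$, and let $\mathcal L$ be a lattice in $\mathbb R^2$. Then $$\#(\mathcal C\cap\mathcal L)<4+\frac{\mathrm{Length}(\mathcal C)}{(A_{\mathcal L}R_1)^{1/3}}.$$ If in addition the total curvature satisfies $\int_{\mathcal C}\kappa\,ds\le\pi$, then $$\#(\mathcal C\cap\mathcal L)<2+\frac{\mathrm{Length}(\mathcal C)}{(A_{\mathcal L}R_1)^{1/3}}.$$
   Context: A lattice is a set $\mathcal L=\mathcal L(v_0,v_1,v_2)=\{v_0+mv_1+nv_2: m,n\in\mathbb Z\}$ where $v_0,v_1,v_2\in\mathbb R^2$ and $v_1,v_2$ are linearly independent. Its invariant is $A_{\mathcal L}=|\det(v_1,v_2)|$. All curves are of class $C^2$ with nonvanishing first and second derivative vectors, oriented so that the curvature $\kappa$ is positive; a convex curve is such a curve lying on the boundary of a convex planar region, and an open convex curve is a non-closed arc of such a boundary. The radius of curvature is $\rho=1/\kappa$, $s$ is arclength, and the total curvature is $\int_{\mathcal C}\kappa\,ds$. *)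

(* Defs.v *)
From Stdlib Require Import Reals Lra ZArith List.
From Coquelicot Require Import Coquelicot.
Open Scope R_scope.

Definition det2 (v1 v2 : R * R) : R := fst v1 * snd v2 - snd v1 * fst v2.

Definition in_lattice (v0 v1 v2 : R * R) (p : R * R) : Prop :=
  exists m n : Z,
    fst p = fst v0 + IZR m * fst v1 + IZR n * fst v2 /\
    snd p = snd v0 + IZR m * snd v1 + IZR n * snd v2.

Definition lattice_invariant (v1 v2 : R * R) : R := Rabs (det2 v1 v2).

Definition convex_set (K : R * R -> Prop) : Prop :=
  forall p q : R * R, K p -> K q -> forall l : R, 0 <= l <= 1 ->
    K ((1 - l) * fst p + l * fst q, (1 - l) * snd p + l * snd q).

Definition interior_pt (K : R * R -> Prop) (p : R * R) : Prop :=
  exists e : R, 0 < e /\ forall q : R * R,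
    (fst q - fst p) ^ 2 + (snd q - snd p) ^ 2 < e ^ 2 -> K q.

Definition boundary_pt (K : R * R -> Prop) (p : R * R) : Prop :=
  K p /\ ~ interior_pt K p.

Definition C2_regular (x y : R -> R) (a b : R) : Prop :=
  forall t, a <= t <= b ->
    ex_derive x t /\ ex_derive y t /\
    ex_derive (Derive x) t /\ ex_derive (Derive y) t /\
    continuous (Derive (Derive x)) t /\ continuous (Derive (Derive y)) t /\
    ((Derive x t) ^ 2 + (Derive y t) ^ 2 <> 0).

Definition speed (x y : R -> R) (t : R) : R :=
  sqrt ((Derive x t) ^ 2 + (Derive y t) ^ 2).

Definition curvature (x y : R -> R) (t : R) : R :=
  (Derive x t * Derive (Derive y) t - Derive y t * Derive (Derive x) t)
  / (speed x y t) ^ 3.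

Definition curve_length (x y : R -> R) (a b : R) : R :=
  RInt (speed x y) a b.

Definition total_curvature (x y : R -> R) (a b : R) : R :=
  RInt (fun t => Rabs (curvature x y t) * speed x y t) a b.

(** Open convex curve: a non-closed (injective) C^2 arc with nonzero
    curvature lying on the boundary of a convex planar region. *)
Definition open_convex_curve (x y : R -> R) (a b : R) : Prop :=
  a < b /\ C2_regular x y a b /\
  (forall t, a <= t <= b -> curvature x y t <> 0) /\
  (forall s t, a <= s <= b -> a <= t <= b -> (x s, y s) = (x t, y t) -> s = t) /\
  exists K : R * R -> Prop, convex_set K /\
    forall t, a <= t <= b -> boundary_pt K (x t, y t).

Definition on_curve (x y : R -> R) (a b : R) (p : R * R) : Prop :=
  exists t, a <= t <= b /\ p = (x t, y t).

(* Main.v *)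
Require Import Defs.
From Stdlib Require Import Reals List.
From Coquelicot Require Import Coquelicot.
From Stdlib Require Import Lra Psatz Classical Wf_nat ZArith Lia.
Open Scope R_scope.


Lemma conv_pt (K : R * R -> Prop) (p q V : R * R) (l : R) :
  convex_set K -> K p -> K q -> 0 <= l <= 1 ->
  fst V = (1 - l) * fst p + l * fst q ->
  snd V = (1 - l) * snd p + l * snd q -> K V.
Proof.
  intros HK Hp Hq Hl H1 H2. destruct V as [v1 v2]; simpl in *; subst.
  apply HK; auto.
Qed.

Lemma conv3 (K : R * R -> Prop) (E1 E2 Z V : R * R) (al be ga : R) :
  convex_set K -> K E1 -> K E2 -> K Z ->
  0 <= al -> 0 <= be -> 0 <= ga -> al + be + ga = 1 ->
  fst V = al * fst E1 + be * fst E2 + ga * fst Z ->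
  snd V = al * snd E1 + be * snd E2 + ga * snd Z -> K V.
Proof.
  intros HK H1 H2 HZ Ha Hb Hg Hs HV1 HV2.
  destruct (Req_dec ga 1) as [Hg1|Hg1].
  - apply (conv_pt K E1 Z V 1); auto; try lra.
    + rewrite HV1. assert (al = 0) by lra. assert (be = 0) by lra. subst. lra.
    + rewrite HV2. assert (al = 0) by lra. assert (be = 0) by lra. subst. lra.
  - set (l := be / (1 - ga)).
    assert (Hl : 0 <= l <= 1).
    { unfold l; split. apply Rdiv_le_0_compat; lra.
      apply Rmult_le_reg_r with (1 - ga). lra. field_simplify; lra. }
    set (W := (fst E1 + l * (fst E2 - fst E1), snd E1 + l * (snd E2 - snd E1))).
    assert (KW : K W).
    { apply (conv_pt K E1 E2 W l); auto; simpl; ring. }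
    apply (conv_pt K W Z V ga); auto; try lra; unfold W, l; simpl.
    all: idtac.
    + rewrite HV1. assert (al = 1 - be - ga) by lra. subst al. field. lra.
    + rewrite HV2. assert (al = 1 - be - ga) by lra. subst al. field. lra.
Qed.

Definition cr (a1 a2 b1 b2 : R) : R := a1 * b2 - a2 * b1.

Lemma sq_lt_abs (u e : R) : 0 < e -> u ^ 2 < e ^ 2 -> Rabs u < e.
Proof.
  intros He H. apply Rabs_def1; nra.
Qed.

Lemma cr_bound (u1 u2 z1 z2 e : R) : Rabs u1 <= e -> Rabs u2 <= e ->
  Rabs (u1 * z2 - u2 * z1) <= e * (Rabs z1 + Rabs z2).
Proof.
  intros H1 H2.
  eapply Rle_trans. apply Rabs_triang.
  rewrite Rabs_Ropp, !Rabs_mult.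
  assert (0 <= Rabs z1) by apply Rabs_pos. assert (0 <= Rabs z2) by apply Rabs_pos.
  nra.
Qed.

Lemma tri (K : R * R -> Prop) (E1 E2 Z V : R * R) (mu : R) :
  convex_set K -> K E1 -> K E2 -> K Z ->
  let d1 := fst E2 - fst E1 in let d2 := snd E2 - snd E1 in
  let z1 := fst Z - fst E1 in let z2 := snd Z - snd E1 in
  let n := d1 * z2 - d2 * z1 in
  n <> 0 -> 0 < mu < 1 ->
  let e := Rmin mu (1 - mu) * Rabs n / (2 * (1 + Rabs z1 + Rabs z2 + Rabs d1 + Rabs d2)) in
  (fst V - (fst E1 + mu * d1)) ^ 2 + (snd V - (snd E1 + mu * d2)) ^ 2 < e ^ 2 ->
  0 <= (d1 * (snd V - snd E1) - d2 * (fst V - fst E1)) / n ->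
  K V.
Proof.
  intros HK H1 H2 HZ d1 d2 z1 z2 n Hn Hmu e HV Hg.
  set (u1 := fst V - (fst E1 + mu * d1)).
  set (u2 := snd V - (snd E1 + mu * d2)).
  assert (Hn' : 0 < Rabs n) by (apply Rabs_pos_lt; auto).
  assert (HS : 0 < 1 + Rabs z1 + Rabs z2 + Rabs d1 + Rabs d2).
  { pose proof (Rabs_pos z1); pose proof (Rabs_pos z2); pose proof (Rabs_pos d1);
    pose proof (Rabs_pos d2); lra. }
  assert (Hmin : 0 < Rmin mu (1 - mu)) by (apply Rmin_glb_lt; lra).
  assert (He : 0 < e) by (unfold e; apply Rdiv_lt_0_compat; nra).
  assert (Hu1 : Rabs u1 <= e).
  { left; apply sq_lt_abs; auto. unfold u1. pose proof (pow2_ge_0 u2). unfold u2 in *. lra. }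
  assert (Hu2 : Rabs u2 <= e).
  { left; apply sq_lt_abs; auto. unfold u2. pose proof (pow2_ge_0 u1). unfold u1 in *. lra. }
  set (Bn := u1 * z2 - u2 * z1).
  set (Gn := d1 * u2 - d2 * u1).
  assert (HB : Rabs Bn <= e * (Rabs z1 + Rabs z2)) by (apply cr_bound; auto).
  assert (HG : Rabs Gn <= e * (Rabs d1 + Rabs d2)).
  { unfold Gn. replace (d1 * u2 - d2 * u1) with (- (u1 * d2 - u2 * d1)) by ring.
    rewrite Rabs_Ropp. apply cr_bound; auto. }
  assert (Hsum : Rabs Bn + Rabs Gn <= Rmin mu (1 - mu) * Rabs n / 2).
  { assert (e * (1 + Rabs z1 + Rabs z2 + Rabs d1 + Rabs d2) = Rmin mu (1 - mu) * Rabs n / 2).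
    { unfold e. field. lra. }
    pose proof (Rabs_pos d1); pose proof (Rabs_pos d2). nra. }
  set (be := mu + Bn / n). set (ga := Gn / n).
  assert (Hbe : Rabs (Bn / n) <= Rmin mu (1 - mu) / 2).
  { rewrite Rabs_div by auto. apply Rmult_le_reg_r with (Rabs n); auto.
    field_simplify; try lra. pose proof (Rabs_pos Gn). nra. }
  assert (Hga : Rabs (Gn / n) <= Rmin mu (1 - mu) / 2).
  { rewrite Rabs_div by auto. apply Rmult_le_reg_r with (Rabs n); auto.
    field_simplify; try lra. pose proof (Rabs_pos Bn). nra. }
  assert (Hsum2 : Rabs (Bn / n) + Rabs (Gn / n) <= Rmin mu (1 - mu) / 2).
  { rewrite !Rabs_div by auto. apply Rmult_le_reg_r with (Rabs n); auto.
    field_simplify; try lra. }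
  assert (Hm1 : Rmin mu (1 - mu) <= mu) by apply Rmin_l.
  assert (Hm2 : Rmin mu (1 - mu) <= 1 - mu) by apply Rmin_r.
  assert (Hga_eq : ga = (d1 * (snd V - snd E1) - d2 * (fst V - fst E1)) / n).
  { unfold ga, Gn, u1, u2. field. auto. }
  assert (Hbe_eq : be = ((fst V - fst E1) * z2 - (snd V - snd E1) * z1) / n).
  { unfold be, Bn, u1, u2. field_simplify; auto. unfold n. field. auto. }
  pose proof (Rabs_le_between' (Bn / n) 0 (Rmin mu (1 - mu) / 2)) as _.
  assert (A1 := Rle_abs (Bn / n)). assert (A2 := Rle_abs (- (Bn / n))).
  assert (A3 := Rle_abs (Gn / n)). assert (A4 := Rle_abs (- (Gn / n))).
  rewrite Rabs_Ropp in A2, A4.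
  apply (conv3 K E1 E2 Z V (1 - be - ga) be ga); auto; try (unfold be, ga; lra).
  - rewrite Hga_eq; exact Hg.
  - rewrite Hga_eq, Hbe_eq. unfold n, z1, z2, d1, d2 in *. field. auto.
  - rewrite Hga_eq, Hbe_eq. unfold n, z1, z2, d1, d2 in *. field. auto.
Qed.


Lemma core (K : R * R -> Prop) (E1 E2 Z Z' : R * R) (mu : R) :
  convex_set K -> K E1 -> K E2 -> K Z -> K Z' -> 0 < mu < 1 ->
  ((fst E2 - fst E1) * (snd Z - snd E1) - (snd E2 - snd E1) * (fst Z - fst E1)) *
  ((fst E2 - fst E1) * (snd Z' - snd E1) - (snd E2 - snd E1) * (fst Z' - fst E1)) < 0 ->
  interior_pt K (fst E1 + mu * (fst E2 - fst E1), snd E1 + mu * (snd E2 - snd E1)).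
Proof.
  intros HK H1 H2 HZ HZ' Hmu Hprod.
  set (n := (fst E2 - fst E1) * (snd Z - snd E1) - (snd E2 - snd E1) * (fst Z - fst E1)) in *.
  set (n' := (fst E2 - fst E1) * (snd Z' - snd E1) - (snd E2 - snd E1) * (fst Z' - fst E1)) in *.
  assert (Hn : n <> 0) by (intro h; rewrite h in Hprod; lra).
  assert (Hn' : n' <> 0) by (intro h; rewrite h in Hprod; lra).
  set (S := fun z1 z2 d1 d2 nn => Rmin mu (1 - mu) * Rabs nn / (2 * (1 + Rabs z1 + Rabs z2 + Rabs d1 + Rabs d2))).
  set (e1 := S (fst Z - fst E1) (snd Z - snd E1) (fst E2 - fst E1) (snd E2 - snd E1) n).
  set (e2 := S (fst Z' - fst E1) (snd Z' - snd E1) (fst E2 - fst E1) (snd E2 - snd E1) n').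
  assert (Hmin : 0 < Rmin mu (1 - mu)) by (apply Rmin_glb_lt; lra).
  assert (Spos : forall z1 z2 d1 d2 nn, nn <> 0 -> 0 < S z1 z2 d1 d2 nn).
  { intros. unfold S. apply Rdiv_lt_0_compat.
    apply Rmult_lt_0_compat; auto. apply Rabs_pos_lt; auto.
    pose proof (Rabs_pos z1); pose proof (Rabs_pos z2); pose proof (Rabs_pos d1);
    pose proof (Rabs_pos d2); lra. }
  assert (He1 : 0 < e1) by (apply Spos; auto).
  assert (He2 : 0 < e2) by (apply Spos; auto).
  exists (Rmin e1 e2). split. apply Rmin_glb_lt; auto.
  intros q Hq. simpl in Hq.
  assert (Hm1 : Rmin e1 e2 <= e1) by apply Rmin_l.
  assert (Hm2 : Rmin e1 e2 <= e2) by apply Rmin_r.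
  assert (Hm0 : 0 < Rmin e1 e2) by (apply Rmin_glb_lt; auto).
  set (g := (fst E2 - fst E1) * (snd q - snd E1) - (snd E2 - snd E1) * (fst q - fst E1)).
  destruct (Rle_dec 0 (g * n)) as [Hgn | Hgn].
  - apply (tri K E1 E2 Z q mu HK H1 H2 HZ); auto.
    + fold n. fold (S (fst Z - fst E1) (snd Z - snd E1) (fst E2 - fst E1) (snd E2 - snd E1) n).
      fold e1. simpl. nra.
    + fold n. fold g. replace (g / n) with (g * n / (n * n)) by (field; auto).
      apply Rdiv_le_0_compat; auto. nra.
  - apply (tri K E1 E2 Z' q mu HK H1 H2 HZ'); auto.
    + fold n'. fold (S (fst Z' - fst E1) (snd Z' - snd E1) (fst E2 - fst E1) (snd E2 - snd E1) n').
      fold e2. simpl. nra.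
    + fold n'. fold g. replace (g / n') with (g * n' / (n' * n')) by (field; auto).
      apply Rdiv_le_0_compat; [|nra].
      assert (0 < n * n) by nra.
      assert (g * n' * (n * n) = (g * n) * (n * n')) by ring.
      assert (0 < (g * n) * (n * n')) by nra. nra.
Qed.


Lemma core' (K : R * R -> Prop) (A E1 E2 M Z Z' : R * R) (w1 w2 l1 l2 lm : R) :
  convex_set K -> K E1 -> K E2 -> K Z -> K Z' -> ~ interior_pt K M ->
  (lm - l1) * (l2 - lm) > 0 ->
  fst E1 = fst A + l1 * w1 -> snd E1 = snd A + l1 * w2 ->
  fst E2 = fst A + l2 * w1 -> snd E2 = snd A + l2 * w2 ->
  fst M = fst A + lm * w1 -> snd M = snd A + lm * w2 ->
  (w1 * (snd Z - snd A) - w2 * (fst Z - fst A)) *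
  (w1 * (snd Z' - snd A) - w2 * (fst Z' - fst A)) < 0 -> False.
Proof.
  intros HK H1 H2 HZ HZ' HM Hl e11 e12 e21 e22 m1 m2 Hp.
  assert (Hd : l2 - l1 <> 0).
  { intro h. assert (l2 = l1) by lra. rewrite H in Hl. replace ((lm - l1) * (l1 - lm)) with (-((lm-l1)*(lm-l1))) in Hl by ring. pose proof (Rle_0_sqr (lm - l1)). unfold Rsqr in *. lra. }
  set (mu := (lm - l1) / (l2 - l1)).
  assert (Hmu : 0 < mu < 1).
  { assert (0 < mu * (1 - mu)).
    { replace (mu * (1 - mu)) with ((lm - l1) * (l2 - lm) / ((l2 - l1) * (l2 - l1))).
      apply Rdiv_lt_0_compat; nra. unfold mu; field; auto. }
    nra. }
  apply HM.
  replace M with (fst E1 + mu * (fst E2 - fst E1), snd E1 + mu * (snd E2 - snd E1)).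
  2:{ destruct M as [M1 M2]; simpl in *. rewrite e11, e12, e21, e22, m1, m2.
      unfold mu; f_equal; field; auto. }
  apply core with Z Z'; auto.
  rewrite e11, e12, e21, e22.
  replace ((fst A + l2 * w1 - (fst A + l1 * w1)) * (snd Z - (snd A + l1 * w2)) -
    (snd A + l2 * w2 - (snd A + l1 * w2)) * (fst Z - (fst A + l1 * w1))) with
    ((l2 - l1) * (w1 * (snd Z - snd A) - w2 * (fst Z - fst A))) by ring.
  replace ((fst A + l2 * w1 - (fst A + l1 * w1)) * (snd Z' - (snd A + l1 * w2)) -
    (snd A + l2 * w2 - (snd A + l1 * w2)) * (fst Z' - (fst A + l1 * w1))) with
    ((l2 - l1) * (w1 * (snd Z' - snd A) - w2 * (fst Z' - fst A))) by ring.
  assert (0 < (l2 - l1) * (l2 - l1)) by nra.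
  replace ((l2 - l1) * (w1 * (snd Z - snd A) - w2 * (fst Z - fst A)) *
    ((l2 - l1) * (w1 * (snd Z' - snd A) - w2 * (fst Z' - fst A)))) with
    (((l2 - l1) * (l2 - l1)) * ((w1 * (snd Z - snd A) - w2 * (fst Z - fst A)) *
    (w1 * (snd Z' - snd A) - w2 * (fst Z' - fst A)))) by ring.
  nra.
Qed.

Lemma par_decomp (w1 w2 v1 v2 : R) : w1 * w1 + w2 * w2 <> 0 ->
  w1 * v2 - w2 * v1 = 0 ->
  let mu := (v1 * w1 + v2 * w2) / (w1 * w1 + w2 * w2) in
  v1 = mu * w1 /\ v2 = mu * w2.
Proof.
  intros Hw Hc mu. unfold mu. split.
  - apply Rmult_eq_reg_r with (w1 * w1 + w2 * w2); auto. field_simplify; auto.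
    replace (v1 * w1 ^ 2 + v1 * w2 ^ 2) with (v1 * w1 * w1 + v2 * w2 * w1 - w2 * (w1 * v2 - w2 * v1)) by ring.
    rewrite Hc. ring.
  - apply Rmult_eq_reg_r with (w1 * w1 + w2 * w2); auto. field_simplify; auto.
    replace (v2 * w1 ^ 2 + v2 * w2 ^ 2) with (v1 * w1 * w2 + v2 * w2 * w2 + w1 * (w1 * v2 - w2 * v1)) by ring.
    rewrite Hc. ring.
Qed.

Lemma Astar (K : R * R -> Prop) (A B C : R * R) (w1 w2 : R) :
  convex_set K -> boundary_pt K A -> boundary_pt K B -> boundary_pt K C ->
  A <> B -> A <> C -> B <> C ->
  w1 * w1 + w2 * w2 <> 0 ->
  w1 * (snd B - snd A) - w2 * (fst B - fst A) = 0 ->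
  w1 * (snd C - snd A) - w2 * (fst C - fst A) = 0 ->
  forall Z Z', K Z -> K Z' ->
  0 <= (w1 * (snd Z - snd A) - w2 * (fst Z - fst A)) *
       (w1 * (snd Z' - snd A) - w2 * (fst Z' - fst A)).
Proof.
  intros HK [KA IA] [KB IB] [KC IC] HAB HAC HBC Hw HB HC Z Z' HZ HZ'.
  apply Rnot_lt_le. intro Hp.
  destruct (par_decomp w1 w2 _ _ Hw HB) as [b1 b2].
  destruct (par_decomp w1 w2 _ _ Hw HC) as [c1 c2].
  set (mB := ((fst B - fst A) * w1 + (snd B - snd A) * w2) / (w1 * w1 + w2 * w2)) in *.
  set (mC := ((fst C - fst A) * w1 + (snd C - snd A) * w2) / (w1 * w1 + w2 * w2)) in *.
  assert (nB : mB <> 0).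
  { intro h. apply HAB. destruct A, B; simpl in *. rewrite h in b1, b2. f_equal; lra. }
  assert (nC : mC <> 0).
  { intro h. apply HAC. destruct A, C; simpl in *. rewrite h in c1, c2. f_equal; lra. }
  assert (nBC : mB <> mC).
  { intro h. apply HBC. destruct A, B, C; simpl in *. rewrite h in b1, b2. f_equal; lra. }
  destruct (Rlt_dec 0 ((mB - 0) * (mC - mB))) as [h1|h1].
  - apply (core' K A A C B Z Z' w1 w2 0 mC mB); auto; lra.
  - destruct (Rlt_dec 0 ((mC - 0) * (mB - mC))) as [h2|h2].
    + apply (core' K A A B C Z Z' w1 w2 0 mB mC); auto; lra.
    + assert (h3 : (0 - mB) * (mC - 0) > 0).
      { destruct (Rlt_or_le 0 mB); destruct (Rlt_or_le 0 mC);
        destruct (Rlt_or_le mB mC); try nra;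
        exfalso; first [apply h1; nra | apply h2; nra]. }
      apply (core' K A B C A Z Z' w1 w2 mB mC 0); auto; lra.
Qed.


Definition cl (a b t : R) : R := Rmax a (Rmin b t).

Lemma cl_in a b t : a <= b -> a <= cl a b t <= b.
Proof. intros. unfold cl. unfold Rmax, Rmin. repeat destruct Rle_dec; lra. Qed.

Lemma cl_id a b t : a <= t <= b -> cl a b t = t.
Proof. intros. unfold cl. unfold Rmax, Rmin. repeat destruct Rle_dec; lra. Qed.

Lemma cl_lip a b s t : a <= b -> Rabs (cl a b s - cl a b t) <= Rabs (s - t).
Proof.
  intros. unfold cl, Rmax, Rmin. repeat destruct Rle_dec;
  unfold Rabs; repeat destruct Rcase_abs; lra.
Qed.

Lemma cont_cl a b t : a <= b -> continuous (cl a b) t.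
Proof.
  intros Hab. apply continuity_pt_filterlim.
  intros eps Heps. exists eps. split; auto. intros z [_ Hz].
  unfold R_dist in *. simpl. eapply Rle_lt_trans. apply cl_lip; auto. auto.
Qed.

Lemma cont_comp_cl (f : R -> R) a b :
  a <= b -> (forall t, a <= t <= b -> continuous f t) ->
  forall t, continuous (fun r => f (cl a b r)) t.
Proof.
  intros Hab Hf t. apply continuous_comp. apply cont_cl; auto. apply Hf, cl_in; auto.
Qed.

Lemma CMP (f f' g g' : R -> R) (p q : R) :
  p <= q ->
  (forall z, p <= z <= q -> is_derive f z (f' z)) ->
  (forall z, p <= z <= q -> is_derive g z (g' z)) ->
  (forall z, p <= z <= q -> Rabs (f' z) <= g' z) ->
  Rabs (f q - f p) <= g q - g p.
Proof.
  intros Hpq Hf Hg Hb.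
  assert (Hmm : Rmin p q = p) by (apply Rmin_left; lra).
  assert (HMM : Rmax p q = q) by (apply Rmax_right; lra).
  assert (cf : forall z, p <= z <= q -> continuity_pt f z).
  { intros. apply continuity_pt_filterlim. apply (ex_derive_continuous f).
    eexists; apply Hf; auto. }
  assert (cg : forall z, p <= z <= q -> continuity_pt g z).
  { intros. apply continuity_pt_filterlim. apply (ex_derive_continuous g).
    eexists; apply Hg; auto. }
  destruct (MVT_gen (fun z => g z - f z) p q (fun z => g' z - f' z)) as [c [Hc Hc']].
  { intros z Hz. rewrite Hmm, HMM in Hz. apply (is_derive_minus g f z (g' z) (f' z)).
    apply Hg; lra. apply Hf; lra. }
  { intros z Hz. rewrite Hmm, HMM in Hz. apply continuity_pt_minus. apply cg; lra. apply cf; lra. }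
  destruct (MVT_gen (fun z => g z + f z) p q (fun z => g' z + f' z)) as [c2 [Hc2 Hc2']].
  { intros z Hz. rewrite Hmm, HMM in Hz. apply (is_derive_plus g f z (g' z) (f' z)).
    apply Hg; lra. apply Hf; lra. }
  { intros z Hz. rewrite Hmm, HMM in Hz. apply continuity_pt_plus. apply cg; lra. apply cf; lra. }
  rewrite Hmm, HMM in Hc, Hc2.
  assert (B1 := Hb c Hc). assert (B2 := Hb c2 Hc2).
  assert (A1 := Rle_abs (f' c)). assert (A2 := Rle_abs (- f' c2)). rewrite Rabs_Ropp in A2.
  assert (0 <= (g' c - f' c) * (q - p)) by (apply Rmult_le_pos; lra).
  assert (0 <= (g' c2 + f' c2) * (q - p)) by (apply Rmult_le_pos; lra).
  apply Rabs_le; lra.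
Qed.

Lemma nonneg_deriv_mono (f f' : R -> R) (p q : R) :
  p <= q ->
  (forall z, p <= z <= q -> is_derive f z (f' z)) ->
  (forall z, p <= z <= q -> 0 < f' z) ->
  (p < q -> f p < f q).
Proof.
  intros Hpq Hf Hpos Hlt.
  assert (Hmm : Rmin p q = p) by (apply Rmin_left; lra).
  assert (HMM : Rmax p q = q) by (apply Rmax_right; lra).
  destruct (MVT_gen f p q f') as [c [Hc Hc']].
  { intros z Hz. rewrite Hmm, HMM in Hz. apply Hf; lra. }
  { intros z Hz. rewrite Hmm, HMM in Hz. apply continuity_pt_filterlim.
    apply (ex_derive_continuous f). eexists; apply Hf; lra. }
  rewrite Hmm, HMM in Hc. assert (0 < f' c) by (apply Hpos; auto).
  assert (0 < f' c * (q - p)) by (apply Rmult_lt_0_compat; lra). lra.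
Qed.

Lemma d_x x y a b t : C2_regular x y a b -> a <= t <= b -> is_derive x t (Derive x t).
Proof. intros H Ht. apply Derive_correct. apply (H t Ht). Qed.
Lemma d_y x y a b t : C2_regular x y a b -> a <= t <= b -> is_derive y t (Derive y t).
Proof. intros H Ht. apply Derive_correct. apply (H t Ht). Qed.
Lemma d_xx x y a b t : C2_regular x y a b -> a <= t <= b ->
  is_derive (Derive x) t (Derive (Derive x) t).
Proof. intros H Ht. apply Derive_correct. apply (H t Ht). Qed.
Lemma d_yy x y a b t : C2_regular x y a b -> a <= t <= b ->
  is_derive (Derive y) t (Derive (Derive y) t).
Proof. intros H Ht. apply Derive_correct. apply (H t Ht). Qed.

Lemma S_pos x y a b t : C2_regular x y a b -> a <= t <= b ->
  0 < Derive x t ^ 2 + Derive y t ^ 2.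
Proof.
  intros H Ht. destruct (H t Ht) as (_&_&_&_&_&_&Hn).
  pose proof (pow2_ge_0 (Derive x t)). pose proof (pow2_ge_0 (Derive y t)). lra.
Qed.

Lemma v_pos x y a b t : C2_regular x y a b -> a <= t <= b -> 0 < speed x y t.
Proof. intros. unfold speed. apply sqrt_lt_R0. eapply S_pos; eauto. Qed.

Lemma v_sq x y a b t : C2_regular x y a b -> a <= t <= b ->
  speed x y t * speed x y t = Derive x t ^ 2 + Derive y t ^ 2.
Proof. intros. unfold speed. apply sqrt_sqrt. left; eapply S_pos; eauto. Qed.

Lemma cont_speed x y a b t : C2_regular x y a b -> a <= t <= b -> continuous (speed x y) t.
Proof.
  intros H Ht. apply (ex_derive_continuous (speed x y)). unfold speed.
  destruct (H t Ht) as (_&_&Hx&Hy&_).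
  assert (Hp := S_pos x y a b t H Ht).
  auto_derive. repeat split; auto. 
Qed.

Lemma cont_x x y a b t : C2_regular x y a b -> a <= t <= b -> continuous x t.
Proof. intros. apply (ex_derive_continuous x). eexists. eapply d_x; eauto. Qed.
Lemma cont_y x y a b t : C2_regular x y a b -> a <= t <= b -> continuous y t.
Proof. intros. apply (ex_derive_continuous y). eexists. eapply d_y; eauto. Qed.

Definition sp x y a b (r : R) : R := speed x y (cl a b r).
Definition mm x y a b (r : R) : R := RInt (sp x y a b) a r.

Lemma sp_cont x y a b t : a <= b -> C2_regular x y a b -> continuous (sp x y a b) t.
Proof.
  intros Hab H. unfold sp. apply (cont_comp_cl (speed x y) a b Hab). intros; eapply cont_speed; eauto.
Qed.

Lemma mm_deriv x y a b t : a <= b -> C2_regular x y a b -> is_derive (mm x y a b) t (sp x y a b t).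
Proof.
  intros Hab H. apply (is_derive_RInt (sp x y a b) (mm x y a b) a).
  - exists (mkposreal 1 Rlt_0_1). intros z _. unfold mm. apply (RInt_correct (V:=R_CompleteNormedModule)).
    apply (ex_RInt_continuous (V:=R_CompleteNormedModule)). intros. apply sp_cont; auto.
  - apply sp_cont; auto.
Qed.

Lemma mm_deriv' x y a b t : a <= b -> C2_regular x y a b -> a <= t <= b ->
  is_derive (mm x y a b) t (speed x y t).
Proof.
  intros Hab H Ht. replace (speed x y t) with (sp x y a b t).
  apply mm_deriv; auto. unfold sp. rewrite cl_id; auto.
Qed.

Lemma mm_lt x y a b p q : a <= b -> C2_regular x y a b -> a <= p -> p < q -> q <= b ->
  mm x y a b p < mm x y a b q.
Proof.
  intros Hab H Hp Hpq Hq. apply (nonneg_deriv_mono _ (sp x y a b) p q); try lra.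
  intros; apply mm_deriv; auto.
  intros z Hz. unfold sp. apply (v_pos x y a b); auto. apply cl_in; auto.
Qed.

Lemma mm_le x y a b p q : a <= b -> C2_regular x y a b -> a <= p -> p <= q -> q <= b ->
  mm x y a b p <= mm x y a b q.
Proof.
  intros. destruct (Req_dec p q). subst; lra. left; apply mm_lt; auto; lra.
Qed.

Lemma length_eq x y a b : a <= b -> C2_regular x y a b ->
  curve_length x y a b = mm x y a b b - mm x y a b a.
Proof.
  intros Hab H. unfold curve_length, mm. rewrite RInt_point.
  replace (zero : R) with 0 by reflexivity. rewrite Rminus_0_r.
  apply RInt_ext. intros z Hz. unfold sp. rewrite cl_id; auto.
  rewrite Rmin_left in Hz by lra. rewrite Rmax_right in Hz by lra. lra.
Qed.


Definition T1 x y t := Derive x t / speed x y t.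
Definition T2 x y t := Derive y t / speed x y t.

Lemma Tder x y a b t c1 c2 : C2_regular x y a b -> a <= t <= b ->
  let s := speed x y t in
  is_derive (fun r => c1 * T2 x y r - c2 * T1 x y r) t
   ((c1 * (Derive (Derive y) t * (s * s) - Derive y t * (Derive x t * Derive (Derive x) t + Derive y t * Derive (Derive y) t))
   - c2 * (Derive (Derive x) t * (s * s) - Derive x t * (Derive x t * Derive (Derive x) t + Derive y t * Derive (Derive y) t))) / (s * s * s)).
Proof.
  intros H Ht s. unfold T1, T2, speed.
  destruct (H t Ht) as (_&_&Hx&Hy&_).
  assert (Hp := S_pos x y a b t H Ht).
  assert (Hs := v_pos x y a b t H Ht). unfold speed in Hs.
  auto_derive.
  - repeat split; auto; simpl in *; try lra.
  - fold s. unfold s, speed.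
    replace (Derive x t * (Derive x t * 1) + Derive y t * (Derive y t * 1)) with
      (Derive x t ^ 2 + Derive y t ^ 2) by ring.
    set (q := sqrt (Derive x t ^ 2 + Derive y t ^ 2)) in *. clearbody q. clear s.
    change (Derive (fun x0 => Derive x x0) t) with (Derive (Derive x) t). change (Derive (fun x0 => Derive y x0) t) with (Derive (Derive y) t). field. lra.
Qed.

Lemma Tder_bound x y a b t c1 c2 : C2_regular x y a b -> a <= t <= b ->
  c1 * c1 + c2 * c2 = 1 ->
  let s := speed x y t in
  Rabs ((c1 * (Derive (Derive y) t * (s * s) - Derive y t * (Derive x t * Derive (Derive x) t + Derive y t * Derive (Derive y) t))
   - c2 * (Derive (Derive x) t * (s * s) - Derive x t * (Derive x t * Derive (Derive x) t + Derive y t * Derive (Derive y) t))) / (s * s * s))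
  <= Rabs (curvature x y t) * s.
Proof.
  intros H Ht Hc s.
  assert (Hs := v_pos x y a b t H Ht). fold s in Hs.
  assert (Hs2 := v_sq x y a b t H Ht). fold s in Hs2.
  rewrite Hs2.
  set (X1 := Derive x t) in *. set (Y1 := Derive y t) in *.
  set (X2 := Derive (Derive x) t). set (Y2 := Derive (Derive y) t).
  replace (c1 * (Y2 * (X1 ^ 2 + Y1 ^ 2) - Y1 * (X1 * X2 + Y1 * Y2)) -
      c2 * (X2 * (X1 ^ 2 + Y1 ^ 2) - X1 * (X1 * X2 + Y1 * Y2))) with
      ((X1 * Y2 - Y1 * X2) * (c1 * X1 + c2 * Y1)) by ring.
  unfold curvature. fold X1 Y1 X2 Y2 s.
  clearbody X1 Y1 X2 Y2 s.
  assert (CS : Rabs (c1 * X1 + c2 * Y1) <= s).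
  { apply Rsqr_incr_0_var. rewrite <- Rsqr_abs. unfold Rsqr.
    replace (s * s) with ((c1 * c1 + c2 * c2) * (X1 ^ 2 + Y1 ^ 2)) by (rewrite Hc; lra).
    assert (E: (c1*c1+c2*c2)*(X1^2+Y1^2) - (c1*X1+c2*Y1)*(c1*X1+c2*Y1) = (c1*Y1 - c2*X1)^2) by ring.
    pose proof (pow2_ge_0 (c1*Y1-c2*X1)). lra. lra. }
  rewrite <- Hs2.
  replace ((X1 * Y2 - Y1 * X2) * (c1 * X1 + c2 * Y1) / (s * s * s)) with
    ((X1 * Y2 - Y1 * X2) / s ^ 3 * (c1 * X1 + c2 * Y1)) by (field; lra).
  rewrite Rabs_mult. apply Rmult_le_compat_l; auto. apply Rabs_pos.
Qed.


Definition Kb x y a b R1 := forall t, a <= t <= b -> Rabs (curvature x y t) <= / R1.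

Definition Tp x y c1 c2 t := let s := speed x y t in
   ((c1 * (Derive (Derive y) t * (s * s) - Derive y t * (Derive x t * Derive (Derive x) t + Derive y t * Derive (Derive y) t))
   - c2 * (Derive (Derive x) t * (s * s) - Derive x t * (Derive x t * Derive (Derive x) t + Derive y t * Derive (Derive y) t))) / (s * s * s)).

Lemma T_unit x y a b t : C2_regular x y a b -> a <= t <= b ->
  T1 x y t * T1 x y t + T2 x y t * T2 x y t = 1.
Proof.
  intros H Ht. unfold T1, T2.
  assert (Hs := v_pos x y a b t H Ht). assert (Hs2 := v_sq x y a b t H Ht).
  apply Rmult_eq_reg_r with (speed x y t * speed x y t). 2: nra.
  field_simplify; try lra.
Qed.

Lemma step_i x y a b R1 sg tau : a <= b -> C2_regular x y a b -> 0 < R1 -> Kb x y a b R1 ->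
  a <= sg -> sg <= tau -> tau <= b ->
  Rabs (T1 x y sg * T2 x y tau - T2 x y sg * T1 x y tau) <= / R1 * (mm x y a b tau - mm x y a b sg).
Proof.
  intros Hab H HR Hk H1 H2 H3.
  set (c1 := T1 x y sg). set (c2 := T2 x y sg).
  assert (Hc : c1 * c1 + c2 * c2 = 1) by (apply (T_unit x y a b); auto; lra).
  replace (c1 * T2 x y tau - c2 * T1 x y tau) with
    ((c1 * T2 x y tau - c2 * T1 x y tau) - (c1 * T2 x y sg - c2 * T1 x y sg)) by (unfold c1, c2; ring).
  rewrite Rmult_minus_distr_l.
  apply (CMP (fun r => c1 * T2 x y r - c2 * T1 x y r) (Tp x y c1 c2) (fun r => / R1 * mm x y a b r)
     (fun r => / R1 * speed x y r)); auto.
  - intros z Hz. exact (Tder x y a b z c1 c2 H (conj (Rle_trans _ _ _ H1 (proj1 Hz)) (Rle_trans _ _ _ (proj2 Hz) H3))).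
  - intros z Hz. apply is_derive_scal. apply mm_deriv'; auto; lra.
  - intros z Hz. eapply Rle_trans. refine (Tder_bound x y a b z c1 c2 H _ Hc). lra.
    apply Rmult_le_compat_r. left; apply (v_pos x y a b); auto; lra.
    apply Hk; lra.
Qed.

Lemma dx_eq x y a b r : C2_regular x y a b -> a <= r <= b ->
  Derive x r = speed x y r * T1 x y r /\ Derive y r = speed x y r * T2 x y r.
Proof.
  intros H Hr. assert (Hs := v_pos x y a b r H Hr). unfold T1, T2. split; field; lra.
Qed.

Lemma mm_D x y a b r : a <= b -> C2_regular x y a b -> a <= r <= b ->
  Derive (mm x y a b) r = speed x y r.
Proof. intros. apply is_derive_unique. apply mm_deriv'; auto. Qed.

Lemma mm_ex x y a b r : a <= b -> C2_regular x y a b -> ex_derive (mm x y a b) r.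
Proof. intros. eexists. apply mm_deriv; auto. Qed.

Lemma step_ii x y a b R1 s t tau : a <= b -> C2_regular x y a b -> 0 < R1 -> Kb x y a b R1 ->
  a <= s -> s <= t -> t <= tau -> tau <= b ->
  Rabs ((x t - x s) * T2 x y tau - (y t - y s) * T1 x y tau) <=
    / R1 * ((mm x y a b tau - mm x y a b s) ^ 2 - (mm x y a b tau - mm x y a b t) ^ 2) / 2.
Proof.
  intros Hab H HR Hk H1 H2 H3 H4.
  set (M := mm x y a b tau). set (c1 := T1 x y tau). set (c2 := T2 x y tau).
  replace ((x t - x s) * c2 - (y t - y s) * c1) with
    ((c2 * x t - c1 * y t) - (c2 * x s - c1 * y s)) by ring.
  replace (/ R1 * ((M - mm x y a b s) ^ 2 - (M - mm x y a b t) ^ 2) / 2) with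
    ((- (/ R1 * (M - mm x y a b t) ^ 2) / 2) - (- (/ R1 * (M - mm x y a b s) ^ 2) / 2)) by (field; lra).
  apply (CMP (fun r => c2 * x r - c1 * y r) (fun r => c2 * Derive x r - c1 * Derive y r)
    (fun r => - (/ R1 * (M - mm x y a b r) ^ 2) / 2) (fun r => / R1 * (M - mm x y a b r) * speed x y r)); auto.
  - intros z Hz. assert (Hz' : a <= z <= b) by lra.
    apply (is_derive_minus (fun r => c2 * x r) (fun r => c1 * y r)).
    + apply is_derive_scal. apply (d_x x y a b); auto.
    + apply is_derive_scal. apply (d_y x y a b); auto.
  - intros z Hz. assert (Hz' : a <= z <= b) by lra.
    assert (Hex := mm_ex x y a b z Hab H).
    auto_derive; auto. rewrite mm_D; auto. field. lra.
  - intros z Hz. assert (Hz' : a <= z <= b) by lra.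
    destruct (dx_eq x y a b z H Hz') as [e1 e2]. rewrite e1, e2.
    replace (c2 * (speed x y z * T1 x y z) - c1 * (speed x y z * T2 x y z)) with
      (speed x y z * (T1 x y z * c2 - T2 x y z * c1)) by ring.
    assert (Hs := v_pos x y a b z H Hz').
    rewrite Rabs_mult, (Rabs_pos_eq (speed x y z)) by lra.
    replace (/ R1 * (M - mm x y a b z) * speed x y z) with
      (speed x y z * (/ R1 * (M - mm x y a b z))) by ring.
    apply Rmult_le_compat_l. lra.
    apply (step_i x y a b R1 z tau); auto; lra.
Qed.

Lemma step_iii x y a b R1 s t u : a <= b -> C2_regular x y a b -> 0 < R1 -> Kb x y a b R1 ->
  a <= s -> s <= t -> t <= u -> u <= b ->
  let l1 := mm x y a b t - mm x y a b s in
  let l2 := mm x y a b u - mm x y a b t in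
  Rabs ((x t - x s) * (y u - y t) - (y t - y s) * (x u - x t)) <= / R1 * (l1 * l2 * (l1 + l2)) / 2.
Proof.
  intros Hab H HR Hk H1 H2 H3 H4 l1 l2.
  set (ms := mm x y a b s). set (mt := mm x y a b t).
  replace ((x t - x s) * (y u - y t) - (y t - y s) * (x u - x t)) with
    (((x t - x s) * y u - (y t - y s) * x u) - ((x t - x s) * y t - (y t - y s) * x t)) by ring.
  replace (/ R1 * (l1 * l2 * (l1 + l2)) / 2) with
    (/ R1 * ((mm x y a b u - ms) ^ 3 - (mm x y a b u - mt) ^ 3) / 6 -
     / R1 * ((mm x y a b t - ms) ^ 3 - (mm x y a b t - mt) ^ 3) / 6)
    by (unfold l1, l2, ms, mt; field; lra).
  apply (CMP (fun r => (x t - x s) * y r - (y t - y s) * x r)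
    (fun r => (x t - x s) * Derive y r - (y t - y s) * Derive x r)
    (fun r => / R1 * ((mm x y a b r - ms) ^ 3 - (mm x y a b r - mt) ^ 3) / 6)
    (fun r => / R1 * ((mm x y a b r - ms) ^ 2 - (mm x y a b r - mt) ^ 2) / 2 * speed x y r)); auto.
  - intros z Hz. assert (Hz' : a <= z <= b) by lra.
    apply (is_derive_minus (fun r => (x t - x s) * y r) (fun r => (y t - y s) * x r)).
    + apply is_derive_scal. eapply d_y; eauto.
    + apply is_derive_scal. eapply d_x; eauto.
  - intros z Hz. assert (Hz' : a <= z <= b) by lra.
    assert (Hex := mm_ex x y a b z Hab H).
    auto_derive; auto. rewrite mm_D; auto. field. lra.
  - intros z Hz. assert (Hz' : a <= z <= b) by lra.
    destruct (dx_eq x y a b z H Hz') as [e1 e2]. rewrite e1, e2.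
    replace ((x t - x s) * (speed x y z * T2 x y z) - (y t - y s) * (speed x y z * T1 x y z)) with
      (speed x y z * ((x t - x s) * T2 x y z - (y t - y s) * T1 x y z)) by ring.
    assert (Hs := v_pos x y a b z H Hz').
    rewrite Rabs_mult, (Rabs_pos_eq (speed x y z)) by lra.
    replace (/ R1 * ((mm x y a b z - ms) ^ 2 - (mm x y a b z - mt) ^ 2) / 2 * speed x y z) with
      (speed x y z * (/ R1 * ((mm x y a b z - ms) ^ 2 - (mm x y a b z - mt) ^ 2) / 2)) by ring.
    apply Rmult_le_compat_l. lra.
    apply (step_ii x y a b R1 s t z); auto; lra.
Qed.


Ltac etaD := repeat match goal with |- context [Derive (fun z => ?f z) ?r] =>
  change (Derive (fun z => f z) r) with (Derive f r) end.

Lemma loc0 (f : R -> R) p q tau l : p < tau < q -> (forall r, p <= r <= q -> f r = 0) ->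
  is_derive f tau l -> l = 0.
Proof.
  intros Ht Hf Hd.
  assert (He : 0 < Rmin (tau - p) (q - tau)) by (apply Rmin_glb_lt; lra).
  assert (Hd0 : is_derive (fun _ : R => 0) tau l).
  { apply (is_derive_ext_loc f). 
    exists (mkposreal _ He). intros r Hb.
    change (Rabs (r - tau) < Rmin (tau - p) (q - tau)) in Hb.
    assert (Rmin (tau - p) (q - tau) <= tau - p) by apply Rmin_l.
    assert (Rmin (tau - p) (q - tau) <= q - tau) by apply Rmin_r.
    apply Rabs_def2 in Hb. apply Hf. lra. auto. }
  apply is_derive_unique in Hd0. rewrite Derive_const in Hd0. auto.
Qed.

Lemma Z0 x y a b p q w1 w2 c1 c2 : C2_regular x y a b ->
  (forall t, a <= t <= b -> curvature x y t <> 0) ->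
  a <= p -> p < q -> q <= b -> w1 * w1 + w2 * w2 <> 0 ->
  (forall r, p <= r <= q -> w1 * (y r - c2) - w2 * (x r - c1) = 0) -> False.
Proof.
  intros H Hk Hp Hpq Hq Hw Hz.
  set (t0 := (p + q) / 2).
  assert (E1 : forall r, p < r < q -> w1 * Derive y r - w2 * Derive x r = 0).
  { intros r Hr. apply (loc0 (fun r => w1 * (y r - c2) - w2 * (x r - c1)) p q r); auto.
    assert (Hr' : a <= r <= b) by lra. destruct (H r Hr') as (ex&ey&_).
    auto_derive; auto. etaD. ring. }
  assert (E2 : w1 * Derive (Derive y) t0 - w2 * Derive (Derive x) t0 = 0).
  { apply (loc0 (fun r => w1 * Derive y r - w2 * Derive x r) ((p + t0) / 2) ((t0 + q) / 2) t0).
    unfold t0; lra. intros r Hr. apply E1. unfold t0 in *; lra.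
    assert (Hr' : a <= t0 <= b) by (unfold t0; lra). destruct (H t0 Hr') as (_&_&ex&ey&_).
    auto_derive; auto. etaD. ring. }
  assert (E3 := E1 t0 ltac:(unfold t0; lra)).
  apply (Hk t0). unfold t0; lra.
  unfold curvature.
  set (X1 := Derive x t0) in *. set (Y1 := Derive y t0) in *.
  set (X2 := Derive (Derive x) t0) in *. set (Y2 := Derive (Derive y) t0) in *.
  clearbody X1 Y1 X2 Y2.
  assert (HK : X1 * Y2 - Y1 * X2 = 0).
  { assert ((w1 * w1 + w2 * w2) * (X1 * Y2 - Y1 * X2) = 0).
    { replace ((w1 * w1 + w2 * w2) * (X1 * Y2 - Y1 * X2)) with
        (w1 * (X1 * (w1 * Y2 - w2 * X2) - X2 * (w1 * Y1 - w2 * X1)) +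
         w2 * (Y1 * (w1 * Y2 - w2 * X2) - Y2 * (w1 * Y1 - w2 * X1))) by ring.
      rewrite E2, E3. ring. }
    apply Rmult_integral in H0. destruct H0; auto. contradiction. }
  rewrite HK. unfold Rdiv. ring.
Qed.

Lemma pt_neq (x y : R -> R) (a b s t : R) :
  (forall s t, a <= s <= b -> a <= t <= b -> (x s, y s) = (x t, y t) -> s = t) ->
  a <= s <= b -> a <= t <= b -> s <> t -> (x s, y s) <> (x t, y t).
Proof. intros Hi Hs Ht Hn He. apply Hn, Hi; auto. Qed.

Lemma NC x y a b s t u : a < b -> C2_regular x y a b ->
  (forall t, a <= t <= b -> curvature x y t <> 0) ->
  (forall s t, a <= s <= b -> a <= t <= b -> (x s, y s) = (x t, y t) -> s = t) ->
  forall K, convex_set K -> (forall t, a <= t <= b -> boundary_pt K (x t, y t)) ->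
  a <= s -> s < t -> t < u -> u <= b ->
  (x t - x s) * (y u - y s) - (y t - y s) * (x u - x s) <> 0.
Proof.
  intros Hab H Hk Hi K HK Hbd Hs Hst Htu Hu Hc.
  set (w1 := x t - x s) in *. set (w2 := y t - y s) in *.
  assert (Hw : w1 * w1 + w2 * w2 <> 0).
  { intro h. assert (w1 = 0) by nra. assert (w2 = 0) by nra.
    apply (pt_neq x y a b s t Hi); try lra. unfold w1, w2 in *. f_equal; lra. }
  set (D := fun r => w1 * (y r - y s) - w2 * (x r - x s)).
  assert (KB : forall r, a <= r <= b -> K (x r, y r)) by (intros r Hr; apply (Hbd r Hr)).
  assert (HA := Astar K (x s, y s) (x t, y t) (x u, y u) w1 w2 HK
     (Hbd s ltac:(lra)) (Hbd t ltac:(lra)) (Hbd u ltac:(lra))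
     (pt_neq x y a b s t Hi ltac:(lra) ltac:(lra) ltac:(lra))
     (pt_neq x y a b s u Hi ltac:(lra) ltac:(lra) ltac:(lra))
     (pt_neq x y a b t u Hi ltac:(lra) ltac:(lra) ltac:(lra)) Hw).
  simpl in HA.
  specialize (HA ltac:(unfold w1, w2; ring) Hc).
  assert (Hex : forall p q, a <= p -> p < q -> q <= b -> D p = 0 -> D q = 0 ->
     exists tau, p < tau < q /\ D tau <> 0).
  { intros p q Hp Hpq Hq Dp Dq. apply NNPP. intro Hno.
    apply (Z0 x y a b p q w1 w2 (x s) (y s) H Hk Hp Hpq Hq Hw).
    intros r Hr. destruct (Req_dec r p) as [->|Hrp]; auto.
    destruct (Req_dec r q) as [->|Hrq]; auto.
    apply NNPP. intro hr. apply Hno. exists r. split; [lra|auto]. }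
  assert (Ds : D s = 0) by (unfold D; ring).
  assert (Dt : D t = 0) by (unfold D, w1, w2; ring).
  assert (Du : D u = 0) by (unfold D; exact Hc).
  destruct (Hex s t ltac:(lra) Hst ltac:(lra) Ds Dt) as [t1 [Ht1 Dt1]].
  destruct (Hex t u ltac:(lra) Htu Hu Dt Du) as [t2 [Ht2 Dt2]].
  set (d := D t1) in *.
  assert (Epos : forall r, a <= r <= b -> 0 <= D r * d).
  { intros r Hr. apply (HA (x r, y r) (x t1, y t1)); auto. apply KB; lra. }
  assert (Ed1 : 0 < d * d) by (apply (Rsqr_pos_lt d); auto).
  assert (Ed2 : 0 < D t2 * d).
  { assert (h := Epos t2 ltac:(lra)). destruct h as [h|h]; auto.
    exfalso. symmetry in h. apply Rmult_integral in h. destruct h; auto. }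
  set (eps := Rmin (d * d) (D t2 * d) / 2).
  assert (He1 : Rmin (d * d) (D t2 * d) <= d * d) by apply Rmin_l.
  assert (He2 : Rmin (d * d) (D t2 * d) <= D t2 * d) by apply Rmin_r.
  assert (He0 : 0 < Rmin (d * d) (D t2 * d)) by (apply Rmin_glb_lt; auto).
  assert (Heps : 0 < eps) by (unfold eps; lra).
  set (Ec := fun r => D (cl a b r) * d).
  assert (Ecc : continuity Ec).
  { intro r. apply continuity_pt_filterlim.
    apply (cont_comp_cl (fun r => D r * d) a b ltac:(lra)).
    intros z Hz. apply (ex_derive_continuous (fun r => D r * d)).
    destruct (H z Hz) as (ex&ey&_). unfold D. auto_derive. auto. }
  assert (EcE : forall r, a <= r <= b -> Ec r = D r * d) by (intros; unfold Ec; rewrite cl_id; auto).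
  assert (IV : forall p q, a <= p -> p <= q -> q <= b ->
     Rmin (D p * d) (D q * d) <= eps <= Rmax (D p * d) (D q * d) ->
     exists r, p <= r <= q /\ D r * d = eps).
  { intros p q Hp Hpq Hq Hb. rewrite <- (EcE p), <- (EcE q) in Hb by lra.
    destruct (IVT_gen Ec p q eps Ecc Hb) as [r [Hr Hv]].
    rewrite Rmin_left in Hr by lra. rewrite Rmax_right in Hr by lra.
    exists r. split; auto. rewrite <- EcE; auto; lra. }
  destruct (IV s t1) as [r1 [Hr1 V1]]; try lra.
  { rewrite Ds, Rmult_0_l. rewrite Rmin_left, Rmax_right by (left; exact Ed1). unfold eps; fold d; lra. }
  destruct (IV t1 t) as [r2 [Hr2 V2]]; try lra.
  { rewrite Dt, Rmult_0_l. rewrite Rmin_right, Rmax_left by (left; exact Ed1). unfold eps; fold d; lra. }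
  destruct (IV t t2) as [r3 [Hr3 V3]]; try lra.
  { rewrite Dt, Rmult_0_l. rewrite Rmin_left, Rmax_right by (left; exact Ed2). unfold eps; fold d; lra. }
  assert (r1 <> s) by (intro h; rewrite h, Ds in V1; lra).
  assert (r1 <> t1) by (intro h; rewrite h in V1; unfold eps in V1; fold d in V1; lra).
  assert (r2 <> t1) by (intro h; rewrite h in V2; unfold eps in V2; fold d in V2; lra).
  assert (r2 <> t) by (intro h; rewrite h, Dt in V2; lra).
  assert (r3 <> t) by (intro h; rewrite h, Dt in V3; lra).
  assert (Hd0 : d <> 0) by (intro h; rewrite h in Ed1; lra).
  assert (D12 : D r2 = D r1) by (apply Rmult_eq_reg_r with d; auto; lra).
  assert (D13 : D r3 = D r1) by (apply Rmult_eq_reg_r with d; auto; lra).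
  assert (HA2 := Astar K (x r1, y r1) (x r2, y r2) (x r3, y r3) w1 w2 HK
     (Hbd r1 ltac:(lra)) (Hbd r2 ltac:(lra)) (Hbd r3 ltac:(lra))
     (pt_neq x y a b r1 r2 Hi ltac:(lra) ltac:(lra) ltac:(lra))
     (pt_neq x y a b r1 r3 Hi ltac:(lra) ltac:(lra) ltac:(lra))
     (pt_neq x y a b r2 r3 Hi ltac:(lra) ltac:(lra) ltac:(lra)) Hw).
  simpl in HA2.
  assert (C2 : w1 * (y r2 - y r1) - w2 * (x r2 - x r1) = 0).
  { replace (w1 * (y r2 - y r1) - w2 * (x r2 - x r1)) with (D r2 - D r1) by (unfold D; ring). lra. }
  assert (C3 : w1 * (y r3 - y r1) - w2 * (x r3 - x r1) = 0).
  { replace (w1 * (y r3 - y r1) - w2 * (x r3 - x r1)) with (D r3 - D r1) by (unfold D; ring). lra. }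
  specialize (HA2 C2 C3 (x s, y s) (x t1, y t1) (KB s ltac:(lra)) (KB t1 ltac:(lra))).
  simpl in HA2.
  replace (w1 * (y s - y r1) - w2 * (x s - x r1)) with (- D r1) in HA2 by (unfold D; ring).
  replace (w1 * (y t1 - y r1) - w2 * (x t1 - x r1)) with (d - D r1) in HA2 by (unfold d, D; ring).
  set (r := D r1) in *. clearbody r d.
  assert (0 <= (- r) * (d - r) * (d * d)) by (apply Rmult_le_pos; lra).
  assert ((- r) * (d - r) * (d * d) = - (r * d) * (d * d - r * d)) by ring.
  rewrite V1 in H6. unfold eps in *. nra.
Qed.


Lemma list_max (l : list R) : l <> nil -> exists u, In u l /\ forall z, In z l -> z <= u.
Proof.
  induction l as [|h l IH]; intros Hl. congruence.
  destruct l as [|h2 l].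
  - exists h. split. left; auto. intros z [->|[]]. lra.
  - destruct IH as [u [Hu Hm]]. discriminate.
    destruct (Rle_dec h u).
    + exists u. split. right; auto. intros z [->|Hz]; auto.
    + exists h. split. left; auto. intros z [->|Hz]. lra. specialize (Hm z Hz). lra.
Qed.

Lemma remove_split (l : list R) u : NoDup l -> In u l ->
  exists l', NoDup l' /\ length l' = pred (length l) /\ ~ In u l' /\
    (forall z, In z l' -> In z l).
Proof.
  intros Hnd Hu. destruct (in_split u l Hu) as [l1 [l2 ->]].
  exists (l1 ++ l2). split. eapply NoDup_remove_1; eauto.
  split. rewrite !length_app. simpl. lia.
  split. eapply NoDup_remove_2; eauto.
  intros z Hz. apply in_or_app. apply in_app_or in Hz. destruct Hz; auto. right; right; auto.
Qed.

Lemma comb (P : R -> Prop) (f : R -> R) (c : R) : 0 < c ->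
  (forall s t u, P s -> P t -> P u -> s < t -> t < u -> 2 * c <= f u - f s) ->
  (forall p q, P p -> P q -> p < q -> f p < f q) ->
  forall n ts, length ts = n -> (1 <= n)%nat -> NoDup ts -> (forall t, In t ts -> P t) ->
  exists lo hi, In lo ts /\ In hi ts /\ c * (INR n - 2) < f hi - f lo.
Proof.
  intros Hc TR MON n. induction n as [n IH] using (well_founded_induction lt_wf).
  intros ts Hlen H1 Hnd HP.
  destruct n as [|[|[|n']]].
  - lia.
  - destruct ts as [|t0 [|]]; simpl in Hlen; try lia.
    exists t0, t0. split. left; auto. split. left; auto. simpl. lra.
  - destruct ts as [|t0 [|t1 [|]]]; simpl in Hlen; try lia.
    apply NoDup_cons_iff in Hnd. destruct Hnd as [Hn _].
    assert (t0 <> t1) by (intro h; apply Hn; left; auto).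
    destruct (Rlt_dec t0 t1).
    + exists t0, t1. split. left; auto. split. right; left; auto.
      assert (f t0 < f t1) by (apply MON; auto; [apply HP; left | apply HP; right; left]; auto).
      simpl. lra.
    + exists t1, t0. split. right; left; auto. split. left; auto.
      assert (f t1 < f t0) by (apply MON; auto; [apply HP; right; left | apply HP; left | lra]; auto).
      simpl. lra.
  - destruct (list_max ts) as [u [Hu Hum]]. { intro h; subst; simpl in Hlen; lia. }
    destruct (remove_split ts u Hnd Hu) as [ts' [Hnd' [Hlen' [Hnu Hsub']]]].
    destruct (list_max ts') as [t [Ht Htm]]. { intro h; subst; simpl in Hlen'; lia. }
    destruct (remove_split ts' t Hnd' Ht) as [ts'' [Hnd'' [Hlen'' [Hnt Hsub'']]]].
    assert (L'' : length ts'' = S n') by (rewrite Hlen'', Hlen', Hlen; simpl; auto).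
    destruct (IH (S n') ltac:(lia) ts'' L'' ltac:(lia) Hnd'' (fun z Hz => HP z (Hsub' z (Hsub'' z Hz))))
      as [lo [hi [Hlo [Hhi Hb]]]].
    assert (hi <> t) by (intro h; subst; contradiction).
    assert (hi <= t) by (apply Htm, Hsub''; auto).
    assert (t <> u) by (intro h; subst; contradiction).
    assert (t <= u) by (apply Hum, Hsub'; auto).
    assert (2 * c <= f u - f hi).
    { apply (TR hi t u); auto; try lra. all: try (apply HP, Hsub', Hsub''; auto). all: try (apply HP, Hsub'; auto). }
    exists lo, u. split. apply Hsub', Hsub''; auto. split; auto.
    rewrite !S_INR in *. lra.
Qed.

Lemma lattice_cross v0 v1 v2 P Q S :
  in_lattice v0 v1 v2 P -> in_lattice v0 v1 v2 Q -> in_lattice v0 v1 v2 S ->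
  exists k : Z, (fst Q - fst P) * (snd S - snd Q) - (snd Q - snd P) * (fst S - fst Q)
     = IZR k * det2 v1 v2.
Proof.
  intros [mP [nP [P1 P2]]] [mQ [nQ [Q1 Q2]]] [mS [nS [S1 S2]]].
  exists ((mQ - mP) * (nS - nQ) - (nQ - nP) * (mS - mQ))%Z.
  rewrite P1, P2, Q1, Q2, S1, S2. unfold det2.
  rewrite minus_IZR, !mult_IZR, !minus_IZR. ring.
Qed.

Lemma IZR_abs_ge1 k : k <> 0%Z -> 1 <= Rabs (IZR k).
Proof.
  intros Hk. rewrite <- abs_IZR. apply IZR_le. lia.
Qed.

Lemma lattice_bound v0 v1 v2 P Q S :
  in_lattice v0 v1 v2 P -> in_lattice v0 v1 v2 Q -> in_lattice v0 v1 v2 S ->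
  (fst Q - fst P) * (snd S - snd Q) - (snd Q - snd P) * (fst S - fst Q) <> 0 ->
  lattice_invariant v1 v2 <=
    Rabs ((fst Q - fst P) * (snd S - snd Q) - (snd Q - snd P) * (fst S - fst Q)).
Proof.
  intros HP HQ HS Hn. destruct (lattice_cross v0 v1 v2 P Q S HP HQ HS) as [k Hk].
  rewrite Hk in *. unfold lattice_invariant. rewrite Rabs_mult.
  assert (k <> 0%Z) by (intro h; subst; apply Hn; simpl; ring).
  assert (1 <= Rabs (IZR k)) by (apply IZR_abs_ge1; auto).
  assert (0 <= Rabs (det2 v1 v2)) by apply Rabs_pos. nra.
Qed.

Lemma cube_root_eq z : 0 < z -> Rpower z (1/3) ^ 3 = z /\ 0 < Rpower z (1/3).
Proof.
  intros Hz. assert (Hc : 0 < Rpower z (1/3)) by (unfold Rpower; apply exp_pos).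
  split; auto. rewrite <- (Rpower_pow 3 _ Hc). rewrite Rpower_mult.
  replace (1 / 3 * INR 3) with 1 by (simpl; field). apply Rpower_1; auto.
Qed.


Lemma cube_lt L M : 0 < L -> L < M -> L ^ 3 < M ^ 3.
Proof.
  intros. assert (M ^ 3 - L ^ 3 = (M - L) * (M * M + M * L + L * L)) by ring.
  assert (0 < (M - L) * (M * M + M * L + L * L)).
  { apply Rmult_lt_0_compat. lra. nra. }
  lra.
Qed.

Lemma pts_ts (x y : R -> R) a b (pts : list (R * R)) :
  (forall p, In p pts -> on_curve x y a b p) ->
  exists ts, map (fun t => (x t, y t)) ts = pts /\ forall t, In t ts -> a <= t <= b.
Proof.
  induction pts as [|p pts IH]; intros Hp.
  - exists nil. split; auto. intros t [].
  - destruct (Hp p (or_introl eq_refl)) as [t [Ht ->]].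
    destruct IH as [ts [Hm Hts]]. { intros q Hq. apply Hp. right; auto. }
    exists (t :: ts). split. simpl. rewrite Hm. auto.
    intros z [<-|Hz]; auto.
Qed.

Theorem theorem6p2 (x y : R -> R) (a b R1 : R) (v0 v1 v2 : R * R) :
  open_convex_curve x y a b ->
  0 < R1 ->
  (forall t, a <= t <= b -> / Rabs (curvature x y t) >= R1) ->
  det2 v1 v2 <> 0 ->
  forall pts : list (R * R),
    NoDup pts ->
    (forall p, In p pts -> on_curve x y a b p /\ in_lattice v0 v1 v2 p) ->
    INR (length pts) <
      4 + curve_length x y a b / Rpower (lattice_invariant v1 v2 * R1) (1/3)
    /\
    (total_curvature x y a b <= PI ->
     INR (length pts) <
       2 + curve_length x y a b / Rpower (lattice_invariant v1 v2 * R1) (1/3)).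
Proof.
  intros Hoc HR Hk Hdet pts Hnd Hpts.
  destruct Hoc as (Hab & H & Hkap & Hi & K & HK & Hbd).
  assert (Hab' : a <= b) by lra.
  assert (HKb : Kb x y a b R1).
  { intros t Ht. specialize (Hk t Ht). specialize (Hkap t Ht).
    assert (0 < Rabs (curvature x y t)) by (apply Rabs_pos_lt; auto).
    rewrite <- (Rinv_inv (Rabs (curvature x y t))). apply Rinv_le_contravar; auto; lra. }
  assert (HA : 0 < lattice_invariant v1 v2) by (apply Rabs_pos_lt; auto).
  destruct (cube_root_eq (lattice_invariant v1 v2 * R1)) as [Hc3 Hcpos].
  { apply Rmult_lt_0_compat; auto. }
  set (c := Rpower (lattice_invariant v1 v2 * R1) (1 / 3)) in *.
  set (A := lattice_invariant v1 v2) in *.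
  set (P := fun t => a <= t <= b /\ in_lattice v0 v1 v2 (x t, y t)).
  assert (TR : forall s t u, P s -> P t -> P u -> s < t -> t < u ->
     2 * c <= mm x y a b u - mm x y a b s).
  { intros s t u [Hs Ls] [Ht Lt] [Hu Lu] Hst Htu.
    assert (Hn := NC x y a b s t u Hab H Hkap Hi K HK Hbd ltac:(lra) Hst Htu ltac:(lra)).
    assert (Hlb := lattice_bound v0 v1 v2 _ _ _ Ls Lt Lu). simpl in Hlb.
    replace ((x t - x s) * (y u - y t) - (y t - y s) * (x u - x t)) with
      ((x t - x s) * (y u - y s) - (y t - y s) * (x u - x s)) in Hlb by ring.
    specialize (Hlb Hn). fold A in Hlb.
    assert (H3 := step_iii x y a b R1 s t u Hab' H HR HKb ltac:(lra) ltac:(lra) ltac:(lra) ltac:(lra)).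
    simpl in H3.
    replace ((x t - x s) * (y u - y t) - (y t - y s) * (x u - x t)) with
      ((x t - x s) * (y u - y s) - (y t - y s) * (x u - x s)) in H3 by ring.
    assert (l1p : mm x y a b s < mm x y a b t) by (apply mm_lt; auto; lra).
    assert (l2p : mm x y a b t < mm x y a b u) by (apply mm_lt; auto; lra).
    set (l1 := mm x y a b t - mm x y a b s) in *.
    set (l2 := mm x y a b u - mm x y a b t) in *.
    replace (mm x y a b u - mm x y a b s) with (l1 + l2) by (unfold l1, l2; ring).
    assert (Hl1 : 0 < l1) by (unfold l1; lra). assert (Hl2 : 0 < l2) by (unfold l2; lra).
    clearbody l1 l2.
    assert (h1 : 2 * (A * R1) <= l1 * l2 * (l1 + l2)).
    { assert (A <= / R1 * (l1 * l2 * (l1 + l2)) / 2) by lra.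
      apply Rmult_le_compat_l with (r := 2 * R1) in H0; [|lra].
      replace (2 * R1 * (/ R1 * (l1 * l2 * (l1 + l2)) / 2)) with (l1 * l2 * (l1 + l2)) in H0
        by (field; lra). lra. }
    assert (h2 : 4 * (l1 * l2) <= (l1 + l2) * (l1 + l2)).
    { replace ((l1 + l2) * (l1 + l2)) with (4 * (l1 * l2) + (l1 - l2) * (l1 - l2)) by ring.
      pose proof (Rle_0_sqr (l1 - l2)). unfold Rsqr in *. lra. }
    assert (h3 : (2 * c) ^ 3 <= (l1 + l2) ^ 3).
    { replace ((2 * c) ^ 3) with (8 * c ^ 3) by ring. rewrite Hc3.
      replace ((l1 + l2) ^ 3) with ((l1 + l2) * (l1 + l2) * (l1 + l2)) by ring.
      assert (4 * (l1 * l2) * (l1 + l2) <= (l1 + l2) * (l1 + l2) * (l1 + l2)).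
      { apply Rmult_le_compat_r; lra. }
      lra. }
    destruct (Rle_or_lt (2 * c) (l1 + l2)) as [h|h]; auto.
    exfalso. assert (h4 := cube_lt (l1 + l2) (2 * c) ltac:(lra) h). lra. }
  assert (MON : forall p q, P p -> P q -> p < q -> mm x y a b p < mm x y a b q).
  { intros p q [Hp _] [Hq _] Hpq. apply mm_lt; auto; lra. }
  destruct (pts_ts x y a b pts (fun p Hp => proj1 (Hpts p Hp))) as [ts [Hm Hts]].
  assert (Hlen : length ts = length pts) by (rewrite <- Hm, length_map; auto).
  assert (Hndt : NoDup ts) by (rewrite <- Hm in Hnd; eapply NoDup_map_inv; eauto).
  assert (HPt : forall t, In t ts -> P t).
  { intros t Ht. split. apply Hts; auto. apply (Hpts (x t, y t)). rewrite <- Hm.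
    apply (in_map (fun t => (x t, y t))); auto. }
  rewrite (length_eq x y a b Hab' H).
  assert (Lpos : 0 <= mm x y a b b - mm x y a b a) by (assert (h := mm_le x y a b a b Hab' H); lra).
  assert (Key : INR (length pts) < 2 + (mm x y a b b - mm x y a b a) / c).
  { assert (0 <= (mm x y a b b - mm x y a b a) / c) by (apply Rdiv_le_0_compat; lra).
    destruct (length pts) as [|n] eqn:En.
    - simpl. lra.
    - destruct (comb P (mm x y a b) c Hcpos TR MON (S n) ts ltac:(lia) ltac:(lia) Hndt HPt)
        as [lo [hi [Hlo [Hhi Hb]]]].
      destruct (HPt lo Hlo) as [Hlo' _]. destruct (HPt hi Hhi) as [Hhi' _].
      assert (mm x y a b hi <= mm x y a b b) by (apply mm_le; auto; lra).
      assert (mm x y a b a <= mm x y a b lo) by (apply mm_le; auto; lra).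
      assert (Hcm : c * (INR (S n) - 2) < c * ((mm x y a b b - mm x y a b a) / c)).
      { replace (c * ((mm x y a b b - mm x y a b a) / c)) with (mm x y a b b - mm x y a b a)
          by (field; lra). lra. }
      apply Rmult_lt_reg_l in Hcm; auto. lra. }
  split; intros; lra.
Qed.
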